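(* Let $n,m,k\in\mathbb{N}$, $p\in\mathbb{N}\cup\{0\}$, and let $F:V(T_n)\to V(D_m)$ satisfy $2^{p}d_{T_n}(u,v)\le d_{D_m}(F(u),F(v))\le 2^k\cdot 2^{p}d_{T_n}(u,v)$ for all $u,v\in V(T_n)$. Let $s$ be a vertex of $T_n$, and let $M$ be a subdiamond of $D_m$ such that $F$ maps $s$ and all descendants of $s$ lying in generations $1,2,\dots,2^k+2$ relative to $s$ into $M$. Let $s_1,s_2,s_3,s_4$ be the four grandchildren of $s$, and for $i=1,\dots,4$ let $S_i$ be the set of those descendants of $s_i$ which lie in generations $\ge 2^k+3$ relative to $s$. Then for at most two indices $i\in\{1,2,3,4\}$ the set $S_i$ contains a vertex $x$ with $F(x)\notin M$.
   Context: $T_n$: vertices are finite $0$-$1$ sequences of length at most $n$; two vertices are adjacent if one sequence is obtained from the other by adding one term on the right; metric is the shortest path metric. A descendant of $s$ is a sequence extending $s$; it lies in generation $j$ relative to $s$ if it is $j$ terms longer than $s$ ($s$ itself is generation $0$); grandchildren are the descendants in generation $2$. Diamonds: $D_0$ is an edge; $D_i$ is obtained from $D_{i-1}$ by replacing each edge $uv$ by a quadrilateral $u,a,v,b$; $D_m$ has the shortest path metric with unit edges. A subdiamond of $D_m$ is the set of vertices that evolved from a single edge $e$ of some $D_j$ ($0\le j\le m$), including the endpoints of $e$ (its top and bottom). *)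

(* Defs.v *)
From mathcomp Require Import all_boot.
Set Implicit Arguments. Unset Strict Implicit. Unset Printing Implicit Defensive.

Inductive walk (T : Type) (adj : T -> T -> Prop) : T -> T -> nat -> Prop :=
  | walk0 x : walk adj x x 0
  | walkS x y z k : adj x y -> walk adj y z k -> walk adj x z k.+1.

Definition isdist (T : Type) (adj : T -> T -> Prop) (u v : T) (d : nat) : Prop :=
  walk adj u v d /\ forall d', walk adj u v d' -> d <= d'.

Definition Tvert (n : nat) (s : seq bool) : Prop := size s <= n.
Definition Tadj (n : nat) (u v : seq bool) : Prop :=
  Tvert n u /\ Tvert n v /\ exists b : bool, v = rcons u b \/ u = rcons v b.

(* ---------- The diamond graphs D_m ----------
   An edge of D_m is a word w : seq (bool*bool) of size m; its head (s,h)
   says: w is the edge u--c (h = false) or c--t (h = true) of the quadrilateral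
   u, c, t, c' that replaced the parent edge (behead w) = (u,t) of D_(m-1),
   where c = inr (behead w, s) is the new vertex on side s.
   Vertices: inl false = bottom, inl true = top, inr (w,s) = vertex created on
   side s when subdividing the edge w. [ends w] = (bottom end, top end). *)
Definition dvtx := (bool + (seq (bool * bool) * bool))%type.

Fixpoint ends (w : seq (bool * bool)) : dvtx * dvtx :=
  match w with
  | [::] => (inl false, inl true)
  | (s, h) :: w' =>
      let c : dvtx := inr (w', s) in
      if h then (c, (ends w').2) else ((ends w').1, c)
  end.

Definition Dvert (m : nat) (v : dvtx) : Prop :=
  exists w, size w = m /\ (v = (ends w).1 \/ v = (ends w).2).
Definition Dadj (m : nat) (u v : dvtx) : Prop :=
  exists w, size w = m /\ (ends w = (u, v) \/ ends w = (v, u)).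

(* Subdiamond of D_m generated by the edge e of D_(size e) (size e <= m):
   all vertices of D_m that are endpoints of edges of D_m descending from e
   (the ancestor of an edge w of D_m in D_j is its suffix of size j). *)
Definition subdiamond (m : nat) (e : seq (bool * bool)) (v : dvtx) : Prop :=
  exists w, size w = m /\ suffix e w /\ (v = (ends w).1 \/ v = (ends w).2).

(* Main.v *)
Require Import Defs.
From mathcomp Require Import all_boot.
From Stdlib Require Import Classical.
From mathcomp Require Import zify.
Set Implicit Arguments. Unset Strict Implicit. Unset Printing Implicit Defensive.

Lemma walk_cat T (adj : T -> T -> Prop) u v w a b :
  walk adj u v a -> walk adj v w b -> walk adj u w (a + b).
Proof.
elim=> [x|x y z k hxy _ IH] h; first by rewrite add0n.
rewrite addSn; exact: walkS hxy (IH h).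
Qed.

Lemma walk1 T (adj : T -> T -> Prop) x y : adj x y -> walk adj x y 1.
Proof. move=> h; exact: walkS h (walk0 _ _). Qed.

Lemma walk_rev T (adj : T -> T -> Prop) u v a :
  (forall x y, adj x y -> adj y x) -> walk adj u v a -> walk adj v u a.
Proof.
move=> sym; elim=> [x|x y z k hxy _ IH]; first exact: walk0.
rewrite -addn1; exact: walk_cat IH (walk1 (sym _ _ hxy)).
Qed.

Lemma walk_0 T (adj : T -> T -> Prop) x y : walk adj x y 0 -> x = y.
Proof. by move=> h; inversion h. Qed.

Lemma exists_isdist T (adj : T -> T -> Prop) u v k :
  walk adj u v k -> exists d, isdist adj u v d.
Proof.
elim: k {-2}k (leqnn k) => [|N IH] k hk hw.
  exists k; split=> // d' _; move: hk; rewrite leqn0 => /eqP->; done.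
case: (classic (exists d', d' < k /\ walk adj u v d')) => [[d' [hd' hw']]|hno].
  apply: (IH d') => //; lia.
exists k; split=> // d' hw'; rewrite leqNgt; apply/negP => h; apply hno; by exists d'.
Qed.

Lemma Tadj_sym n u v : Tadj n u v -> Tadj n v u.
Proof. move=> [hu [hv [b hb]]]; split=> //; split=> //; exists b; tauto. Qed.

Lemma walk_down n : forall r x, Tvert n (x ++ r) -> walk (Tadj n) x (x ++ r) (size r).
Proof.
elim=> [|b r IH] x hv; first by rewrite cats0; exact: walk0.
rewrite -cat_rcons in hv *; apply: walkS (IH _ hv).
move: hv; rewrite /Tadj /Tvert size_cat size_rcons => hv.
split; first lia; split; first lia. by exists b; left.
Qed.

Fixpoint lcpn (x y : seq bool) : nat :=
  match x, y with a :: x', b :: y' => if a == b then (lcpn x' y').+1 else 0 | _, _ => 0 end.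

Lemma lcpn_le1 x y : lcpn x y <= size x.
Proof. elim: x y => [|a x IH] [|b y] //=; case: eqP => // _; exact: IH. Qed.
Lemma lcpn_le2 x y : lcpn x y <= size y.
Proof. elim: x y => [|a x IH] [|b y] //=; case: eqP => // _; exact: IH. Qed.
Lemma lcpn_refl x : lcpn x x = size x.
Proof. by elim: x => //= a x ->; rewrite eqxx. Qed.
Lemma lcpn_cat s u v : lcpn (s ++ u) (s ++ v) = size s + lcpn u v.
Proof. by elim: s => //= a s ->; rewrite eqxx. Qed.
Lemma lcpn_rcons x b z : lcpn (rcons x b) z = lcpn x z \/ lcpn (rcons x b) z = (lcpn x z).+1.
Proof.
elim: x z => [|a x IH] [|c z] /=; try by left.
  by case: (b == c); [right|left].
case: (a == c); last by left. by case: (IH z) => ->; [left|right].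
Qed.

Definition tdist (x y : seq bool) := size x + size y - 2 * lcpn x y.

Lemma walk_tdist n x z k : walk (Tadj n) x z k -> tdist x z <= k.
Proof.
elim=> [y|x' y z' k' [_ [_ [b [->|->]]]] _ IH].
  by rewrite /tdist lcpn_refl; lia.
- move: IH; rewrite /tdist size_rcons.
  have := lcpn_le1 x' z'; have := lcpn_le2 x' z'.
  have := lcpn_le1 (rcons x' b) z'; have := lcpn_le2 (rcons x' b) z'.
  rewrite size_rcons; case: (lcpn_rcons x' b z') => ->; lia.
- move: IH; rewrite /tdist size_rcons.
  have := lcpn_le1 y z'; have := lcpn_le2 y z'.
  have := lcpn_le1 (rcons y b) z'; have := lcpn_le2 (rcons y b) z'.
  rewrite size_rcons; case: (lcpn_rcons y b z') => ->; lia.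
Qed.

Definition isEnd (v : dvtx) w := v = (ends w).1 \/ v = (ends w).2.

Lemma suffix_cons (T : eqType) (x : T) w : suffix w (x :: w).
Proof. by apply/suffixP; exists [:: x]. Qed.

Lemma ends_inr_suffix w w0 sd : isEnd (inr (w0, sd)) w -> suffix w0 w.
Proof.
elim: w => [|[s h] w IH]; first by move=> [h|h]; discriminate.
rewrite /isEnd; case: h => /= [[h|h]|[h|h]].
- by case: h => -> _; apply: suffix_cons.
- exact: suffix_trans (IH (or_intror h)) (suffix_cons _ _).
- exact: suffix_trans (IH (or_introl h)) (suffix_cons _ _).
- by case: h => -> _; apply: suffix_cons.
Qed.

Lemma ends_cat_char x e v : isEnd v (x ++ e) -> isEnd v e \/ exists y sd, v = inr (y ++ e, sd).
Proof.
elim: x => [|[s h] x IH] //=; first by left.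
rewrite /isEnd; case: h => /= [[h|h]|[h|h]].
- by right; exists x, s.
- exact: IH (or_intror h).
- exact: IH (or_introl h).
- by right; exists x, s.
Qed.

Lemma Dadj_sym m u v : Dadj m u v -> Dadj m v u.
Proof. move=> [w [hw h]]; exists w; split=> //; tauto. Qed.

Lemma cut m e u v : Dadj m u v -> subdiamond m e u -> ~ subdiamond m e v ->
  isEnd u e.
Proof.
move=> [w [hw hadj]] [w' [hw' [hsuf hu]]] hv.
have hue : isEnd u w by rewrite /isEnd; case: hadj => ->; tauto.
have nsuf : ~~ suffix e w.
  apply/negP => hs; apply: hv; exists w; split=> //; split=> //.
  by case: hadj => ->; tauto.
move/suffixP: hsuf => [x hx]; subst w'.
case: (ends_cat_char hu) => // [[y [sd hy]]]; subst u.
have := ends_inr_suffix hue => hs.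
move: nsuf; rewrite (suffix_trans _ hs) //.
by apply/suffixP; exists y.
Qed.

Lemma exit m e u v k : walk (Dadj m) u v k -> subdiamond m e u -> ~ subdiamond m e v ->
  exists c k', isEnd c e /\ k' <= k /\ walk (Dadj m) u c k'.
Proof.
elim=> [x|x y z k' hxy _ IH] hu hv; first by [].
case: (classic (subdiamond m e y)) => hy.
- have [c [k1 [hc [hk hw]]]] := IH hy hv.
  exists c, k1.+1; split=> //; split; first by []. exact: walkS hxy hw.
- exists x, 0; split; first exact: cut hxy hu hy.
  split=> //; exact: walk0.
Qed.

Lemma ends_walk m : forall d w, size w + d = m ->
  walk (Dadj m) (ends w).1 (ends w).2 (2 ^ d).
Proof.
elim=> [|d IH] w hw.
  apply: walk1; exists w; split; first by rewrite -hw addn0. by left; case: (ends w).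
have h1 := IH ((false, false) :: w); have h2 := IH ((false, true) :: w).
rewrite /= in h1 h2.
rewrite expnS mul2n -addnn.
apply: walk_cat (h1 _) (h2 _); lia.
Qed.

Definition conn m (u v : dvtx) := exists k, walk (Dadj m) u v k.

Lemma conn_trans m u v w : conn m u v -> conn m v w -> conn m u w.
Proof. move=> [a ha] [b hb]; exists (a + b); exact: walk_cat ha hb. Qed.
Lemma conn_sym m u v : conn m u v -> conn m v u.
Proof. move=> [a ha]; exists a; apply: walk_rev ha; exact: Dadj_sym. Qed.

Lemma conn_bot m : forall w, size w <= m ->
  conn m (ends w).1 (inl false) /\ conn m (ends w).2 (inl false).
Proof.
elim=> [|[s h] w IH] hw.
  split; first by exists 0; exact: walk0.
  apply: conn_sym; exists (2 ^ (m - 0)); apply: (ends_walk (w := [::])); rewrite /=; lia.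
have hw' : size w <= m by move: hw => /=; lia.
have [IH1 IH2] := IH hw'.
have hc1 : conn m (inr (w, s)) (inl false).
  apply: conn_trans IH1; apply: conn_sym.
  exists (2 ^ (m - (size w).+1)).
  have := ends_walk (w := (s, false) :: w) (d := m - (size w).+1).
  rewrite /=; apply; move: hw => /=; lia.
by clear hw; case: h.
Qed.

Lemma Dconn m u v : Dvert m u -> Dvert m v -> conn m u v.
Proof.
have H : forall x, Dvert m x -> conn m x (inl false).
  move=> x [w [hw [->|->]]]; have := @conn_bot m w; rewrite hw => h; by case: (h (leqnn m)).
move=> /H hu /H hv; exact: conn_trans hu (conn_sym hv).
Qed.

Lemma descend n m e (F : seq bool -> dvtx) t K : forall r q,
  Tvert n (t ++ q ++ r) -> K <= size q -> subdiamond m e (F (t ++ q)) ->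
  ~ subdiamond m e (F (t ++ q ++ r)) ->
  exists q' b, K <= size q' /\ Tvert n (t ++ rcons q' b) /\
    subdiamond m e (F (t ++ q')) /\ ~ subdiamond m e (F (t ++ rcons q' b)).
Proof.
elim=> [|b r IH] q hv hq hin hout; first by rewrite cats0 in hout.
case: (classic (subdiamond m e (F (t ++ rcons q b)))) => h.
- apply: (IH (rcons q b)) => //; rewrite ?cat_rcons ?size_rcons //; lia.
- exists q, b; split=> //; split=> //.
  move: hv; rewrite /Tvert !size_cat size_rcons /=; lia.
Qed.

Lemma lcpn_pair (i j : bool * bool) q q' : i != j ->
  lcpn ([:: i.1; i.2] ++ q) ([:: j.1; j.2] ++ q') <= 1.
Proof. by case: i => [a1 a2]; case: j => [b1 b2]; case: a1; case: b1; case: a2; case: b2. Qed.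

Theorem lemmaL (n m k p : nat) (F : seq bool -> dvtx)
  (hn : 0 < n) (hm : 0 < m) (hk : 0 < k)
  (hF : forall u, Tvert n u -> Dvert m (F u))
  (hbil : forall u v du dv, Tvert n u -> Tvert n v ->
     isdist (Tadj n) u v du -> isdist (Dadj m) (F u) (F v) dv ->
     2 ^ p * du <= dv /\ dv <= 2 ^ k * 2 ^ p * du)
  (s : seq bool) (hs : Tvert n s)
  (e : seq (bool * bool)) (he : size e <= m)
  (hMs : subdiamond m e (F s))
  (hMgen : forall t, Tvert n t -> prefix s t ->
     1 <= size t - size s <= 2 ^ k + 2 -> subdiamond m e (F t)) :
  forall l : seq (bool * bool), uniq l ->
    (forall i, i \in l -> exists x, Tvert n x /\ prefix (s ++ [:: i.1; i.2]) x /\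
        size s + (2 ^ k + 3) <= size x /\ ~ subdiamond m e (F x)) ->
    size l <= 2.
Proof.
pose good (c : dvtx) (i : bool * bool) := exists q, 2 ^ k <= size q /\
  Tvert n ((s ++ [:: i.1; i.2]) ++ q) /\
  exists k', k' <= 2 ^ k * 2 ^ p /\ walk (Dadj m) (F ((s ++ [:: i.1; i.2]) ++ q)) c k'.
have each : forall i, (exists x, Tvert n x /\ prefix (s ++ [:: i.1; i.2]) x /\
        size s + (2 ^ k + 3) <= size x /\ ~ subdiamond m e (F x)) ->
    good (ends e).1 i \/ good (ends e).2 i.
  move=> i [x [hx [/prefixP [r hr] [hsz hout]]]]; subst x.
  set t := s ++ [:: i.1; i.2] in hx hsz hout *.
  have hst : size t = size s + 2 by rewrite size_cat.
  rewrite size_cat hst in hsz.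
  rewrite -(cat_take_drop (2 ^ k) r) in hx hout.
  have hq : size (take (2 ^ k) r) = 2 ^ k.
    rewrite size_takel //. change (2 ^ k <= size (T:=bool) r). move: hsz; lia.
  have hin : subdiamond m e (F (t ++ take (2 ^ k) r)).
    apply: hMgen.
    - move: hx; rewrite /Tvert !size_cat; lia.
    - by apply/prefixP; exists ([:: i.1; i.2] ++ take (2 ^ k) r); rewrite catA.
    - rewrite size_cat hst hq; apply/andP; split; lia.
  have hK : 2 ^ k <= size (take (2 ^ k) r) by rewrite hq.
  have [q' [b [hq' [hvb [hin' hout']]]]] := descend hx hK hin hout.
  pose a := t ++ q'; pose bb := t ++ rcons q' b.
  have hva : Tvert n a by move: hvb; rewrite /Tvert /a /bb !size_cat size_rcons; lia.
  have hab : Tadj n a bb by split=> //; split=> //; exists b; left; rewrite /a /bb rcons_cat.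
  have hdab : isdist (Tadj n) a bb 1.
    split; first exact: walk1.
    move=> d' hw; case: d' hw => [|d'] hw //; have h := walk_0 hw; move: (congr1 size h); rewrite /a /bb !size_cat size_rcons; lia.
  have [kk hkk] := Dconn (hF _ hva) (hF _ hvb).
  have [dv hdv] := exists_isdist hkk.
  have [_ hdvle] := hbil _ _ _ _ hva hvb hdab hdv.
  have [c [k' [hc [hk' hw]]]] := exit (proj1 hdv) hin' hout'.
  have g : good c i.
    exists q'; split=> //; split=> //; exists k'; split=> //; lia.
  by case: hc => <-; [left|right].
have contra : forall c i j, i != j -> good c i -> good c j -> False.
  move=> c i j hij [q [hq [hv [k1 [hk1 hw1]]]]] [q' [hq' [hv' [k2 [hk2 hw2]]]]].
  set a := (s ++ [:: i.1; i.2]) ++ q in hv hw1.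
  set a' := (s ++ [:: j.1; j.2]) ++ q' in hv' hw2.
  have hD : walk (Dadj m) (F a) (F a') (k1 + k2) := walk_cat hw1 (walk_rev (@Dadj_sym m) hw2).
  have [dv hdv] := exists_isdist hD.
  have hdvle : dv <= k1 + k2 := proj2 hdv _ hD.
  have hT1 : walk (Tadj n) s a (size ([:: i.1; i.2] ++ q)).
    by rewrite /a -catA; apply: walk_down; rewrite catA.
  have hT2 : walk (Tadj n) s a' (size ([:: j.1; j.2] ++ q')).
    by rewrite /a' -catA; apply: walk_down; rewrite catA.
  have hT := walk_cat (walk_rev (@Tadj_sym n) hT1) hT2.
  have [du hdu] := exists_isdist hT.
  have [hlow _] := hbil _ _ _ _ hv hv' hdu hdv.
  have htd := walk_tdist (proj1 hdu).
  have hl : lcpn a a' <= size s + 1.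
    by rewrite /a /a' -!catA lcpn_cat leq_add2l lcpn_pair.
  have hsa : size a = size s + 2 + size q by rewrite /a !size_cat.
  have hsa' : size a' = size s + 2 + size q' by rewrite /a' !size_cat.
  move: htd; rewrite /tdist hsa hsa' => htd.
  have hdu' : 2 * 2 ^ k + 2 <= du by lia.
  have hP : 0 < 2 ^ p by rewrite expn_gt0.
  have : 2 ^ p * (2 * 2 ^ k + 2) <= 2 ^ p * du by rewrite leq_mul2l hdu' orbT.
  move: hlow hdvle hk1 hk2 hP; set P := 2 ^ p; set K := 2 ^ k; nia.
move=> l hu hl.
case: l hu hl => [|i1 [|i2 [|i3 l']]] // hu hl.
move: hu; rewrite /= !inE !negb_or => /andP[/andP[n12 /andP[n13 _]] /andP[/andP[n23 _] _]].
have g1 := each _ (hl i1 (mem_head _ _)).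
have g2 := each _ (hl i2 ltac:(by rewrite !inE eqxx ?orbT)).
have g3 := each _ (hl i3 ltac:(by rewrite !inE eqxx ?orbT)).
exfalso; case: g1 => g1; case: g2 => g2; case: g3 => g3;
  first [exact: (contra _ _ _ n12 g1 g2) | exact: (contra _ _ _ n13 g1 g3) | exact: (contra _ _ _ n23 g2 g3)].
Qed.
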